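(* Let $f\in\mathrm{Homeo}_+(\mathbb{R})$ satisfy $f(x+1)=f(x)+2$ for all $x\in\mathbb{R}$ and $f(0)=0$. For $r=p/2^q$ with $p,q\in\mathbb{Z}$ define $\bar r=f^{-q}(T_p(f^q(0)))$, where $T_p(x)=x+p$. Then the map $r\mapsto\bar r$ from $\mathbb{Q}_2$ to $\mathbb{R}$ is well defined (independent of the representation $r=p/2^q$), strictly increasing, fixes every integer, and satisfies $\overline{r+1}=\bar r+1$ for all $r\in\mathbb{Q}_2$.
   Context: $\mathbb{Q}_2=\{p/2^q:p,q\in\mathbb{Z}\}$ denotes the dyadic rationals; $\mathrm{Homeo}_+(\mathbb{R})$ is the group of increasing self-homeomorphisms of $\mathbb{R}$. *)

(* Defs.v *)
From Stdlib Require Import Reals ZArith.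
Open Scope R_scope.

Definition homeo_plus (f g : R -> R) : Prop :=
  (forall x, g (f x) = x) /\ (forall x, f (g x) = x) /\
  continuity f /\ continuity g /\
  (forall x y, x < y -> f x < f y).

Definition iterZ (f g : R -> R) (z : Z) (x : R) : R :=
  match z with
  | Z0 => x
  | Zpos n => Nat.iter (Pos.to_nat n) f x
  | Zneg n => Nat.iter (Pos.to_nat n) g x
  end.

Definition dyad (p q : Z) : R := IZR p / powerRZ 2 q.

Definition bar (f g : R -> R) (p q : Z) : R :=
  iterZ f g (- q) (iterZ f g q 0 + IZR p).

(* Main.v *)
Require Import Defs.
From Stdlib Require Import Reals ZArith Lra Lia.
Open Scope R_scope.

Lemma IZR2pow (k : nat) : IZR (2 ^ Z.of_nat k) = 2 ^ k.
Proof. rewrite <- pow_IZR. reflexivity. Qed.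

Lemma g0 f g : homeo_plus f g -> f 0 = 0 -> g 0 = 0.
Proof. intros [H1 _] H0. rewrite <- H0 at 1. apply H1. Qed.

Lemma f_nat f : (forall x, f (x + 1) = f x + 2) ->
  forall n x, f (x + INR n) = f x + 2 * INR n.
Proof.
  intros Hf. induction n; intros x.
  - simpl. rewrite Rplus_0_r. ring.
  - rewrite S_INR. replace (x + (INR n + 1)) with ((x + INR n) + 1) by ring.
    rewrite Hf, IHn. ring.
Qed.

Lemma f_int f : (forall x, f (x + 1) = f x + 2) ->
  forall n x, f (x + IZR n) = f x + 2 * IZR n.
Proof.
  intros Hf n x. destruct (Z.le_gt_cases 0 n) as [Hn|Hn].
  - rewrite <- (Z2Nat.id n Hn), <- INR_IZR_INZ. apply f_nat; auto.
  - assert (E : n = (- Z.of_nat (Z.to_nat (- n)))%Z) by lia.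
    rewrite E, opp_IZR, <- INR_IZR_INZ.
    pose proof (f_nat f Hf (Z.to_nat (-n)) (x + - INR (Z.to_nat (- n)))) as K.
    replace (x + - INR (Z.to_nat (- n)) + INR (Z.to_nat (- n))) with x in K by ring.
    lra.
Qed.

Lemma g_int f g : homeo_plus f g -> (forall x, f (x + 1) = f x + 2) ->
  forall m x, g (x + 2 * IZR m) = g x + IZR m.
Proof.
  intros H Hf m x. destruct H as [H1 [H2 _]].
  rewrite <- (H1 (g x + IZR m)). f_equal. rewrite f_int, H2; auto.
Qed.

Lemma g_iter_shift f g : homeo_plus f g -> (forall x, f (x + 1) = f x + 2) ->
  forall k x m, Nat.iter k g (x + 2 ^ k * IZR m) = Nat.iter k g x + IZR m.
Proof.
  intros H Hf. induction k; intros x m.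
  - simpl. ring.
  - replace (x + 2 ^ S k * IZR m) with (x + 2 ^ k * IZR (2 * m))
      by (rewrite mult_IZR; simpl; ring).
    change (g (Nat.iter k g (x + 2 ^ k * IZR (2 * m))) = g (Nat.iter k g x) + IZR m).
    rewrite IHk, mult_IZR. apply (g_int f g H Hf).
Qed.

Lemma g_iter_div f g : homeo_plus f g -> (forall x, f (x + 1) = f x + 2) -> f 0 = 0 ->
  forall k m a, Nat.iter (k + m) g (IZR (a * 2 ^ Z.of_nat m)) = Nat.iter k g (IZR a).
Proof.
  intros H Hf H0 k m a. rewrite Nat.iter_add. f_equal.
  rewrite mult_IZR, IZR2pow.
  replace (IZR a * 2 ^ m) with (0 + 2 ^ m * IZR a) by ring.
  rewrite (g_iter_shift f g H Hf).
  assert (Nat.iter m g 0 = 0) as ->.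
  { induction m; simpl; auto. rewrite IHm. apply (g0 f g H H0). }
  ring.
Qed.

Lemma iter_fix (h : R -> R) : h 0 = 0 -> forall n, Nat.iter n h 0 = 0.
Proof. intros Hh. induction n; simpl; auto. rewrite IHn; auto. Qed.

Lemma f_iter_int f : (forall x, f (x + 1) = f x + 2) -> f 0 = 0 ->
  forall k p, Nat.iter k f (IZR p) = IZR (p * 2 ^ Z.of_nat k).
Proof.
  intros Hf H0. induction k; intros p.
  - simpl. f_equal. lia.
  - simpl Nat.iter. rewrite IHk.
    replace (f (IZR (p * 2 ^ Z.of_nat k))) with (f (0 + IZR (p * 2 ^ Z.of_nat k)))
      by (f_equal; ring).
    rewrite f_int, H0; auto.
    rewrite Nat2Z.inj_succ, Z.pow_succ_r by lia.
    rewrite !mult_IZR. simpl. ring.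
Qed.

Lemma barC f g : homeo_plus f g -> (forall x, f (x + 1) = f x + 2) -> f 0 = 0 ->
  forall p q (N : nat), (q <= Z.of_nat N)%Z ->
  bar f g p q = Nat.iter N g (IZR (p * 2 ^ (Z.of_nat N - q))).
Proof.
  intros H Hf H0 p q N HN. pose proof (g0 f g H H0) as G0.
  unfold bar. destruct q as [|n|n]; simpl iterZ.
  - rewrite Rplus_0_l, Z.sub_0_r.
    symmetry; exact (g_iter_div f g H Hf H0 0 N p).
  - rewrite iter_fix, Rplus_0_l by auto.
    assert (E : N = (Pos.to_nat n + (N - Pos.to_nat n))%nat) by lia.
    assert (E2 : (Z.of_nat N - Z.pos n)%Z = Z.of_nat (N - Pos.to_nat n)) by lia.
    rewrite E2. replace (Nat.iter N g) with (Nat.iter (Pos.to_nat n + (N - Pos.to_nat n)) g) by (f_equal; lia). rewrite (g_iter_div f g H Hf H0). reflexivity.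
  - rewrite iter_fix, Rplus_0_l by auto.
    rewrite f_iter_int by auto.
    replace (p * 2 ^ (Z.of_nat N - Z.neg n))%Z
      with ((p * 2 ^ Z.of_nat (Pos.to_nat n)) * 2 ^ Z.of_nat N)%Z.
    + symmetry; exact (g_iter_div f g H Hf H0 0 N _).
    + rewrite <- Z.mul_assoc, <- Z.pow_add_r by lia. f_equal. f_equal. lia.
Qed.

Lemma dyadC p q (N : nat) : (q <= Z.of_nat N)%Z ->
  dyad p q = IZR (p * 2 ^ (Z.of_nat N - q)) / 2 ^ N.
Proof.
  intros HN. unfold dyad.
  assert (E : (Z.of_nat N - q)%Z = Z.of_nat (Z.to_nat (Z.of_nat N - q))) by lia.
  rewrite E, mult_IZR, IZR2pow, pow_powerRZ, <- E.
  unfold Z.sub. rewrite powerRZ_add by lra. rewrite powerRZ_neg'.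
  rewrite pow_powerRZ.
  assert (powerRZ 2 q <> 0) by (apply powerRZ_NOR; lra).
  assert (powerRZ 2 (Z.of_nat N) <> 0) by (apply powerRZ_NOR; lra).
  field. auto.
Qed.

Lemma g_mono f g : homeo_plus f g -> forall x y, x < y -> g x < g y.
Proof.
  intros [H1 [H2 [_ [_ H5]]]] x y Hxy.
  destruct (Rlt_le_dec (g x) (g y)) as [|Hle]; auto.
  exfalso. destruct (Rle_lt_or_eq_dec _ _ Hle) as [Hl|He].
  - apply H5 in Hl. rewrite !H2 in Hl. lra.
  - apply (f_equal f) in He. rewrite !H2 in He. lra.
Qed.

Lemma g_iter_mono f g : homeo_plus f g -> forall k x y, x < y ->
  Nat.iter k g x < Nat.iter k g y.
Proof.
  intros H. induction k; intros x y Hxy; simpl; auto. apply (g_mono f g H); auto.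
Qed.

Theorem mainTheorem3 (f g : R -> R) :
  homeo_plus f g ->
  (forall x, f (x + 1) = f x + 2) ->
  f 0 = 0 ->
  (* well defined: independent of the representation r = p/2^q *)
  (forall p q p' q' : Z, dyad p q = dyad p' q' -> bar f g p q = bar f g p' q') /\
  (* strictly increasing *)
  (forall p q p' q' : Z, dyad p q < dyad p' q' -> bar f g p q < bar f g p' q') /\
  (* fixes every integer *)
  (forall (p q n : Z), dyad p q = IZR n -> bar f g p q = IZR n) /\
  (* bar(r+1) = bar(r) + 1 *)
  (forall p q p' q' : Z, dyad p' q' = dyad p q + 1 -> bar f g p' q' = bar f g p q + 1).
Proof.
  intros H Hf H0.
  assert (Hpos : forall N : nat, 0 < 2 ^ N) by (intros; apply pow_lt; lra).
  split; [|split; [|split]].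
  - intros p q p' q' E.
    set (N := Z.to_nat (Z.max 0 (Z.max q q'))).
    assert (Hq : (q <= Z.of_nat N)%Z) by lia.
    assert (Hq' : (q' <= Z.of_nat N)%Z) by lia.
    rewrite (dyadC p q N Hq), (dyadC p' q' N Hq') in E.
    rewrite (barC f g H Hf H0 p q N Hq), (barC f g H Hf H0 p' q' N Hq').
    specialize (Hpos N).
    assert (E' : IZR (p * 2 ^ (Z.of_nat N - q)) = IZR (p' * 2 ^ (Z.of_nat N - q'))).
    { apply (Rmult_eq_reg_r (/ 2 ^ N)). exact E. apply Rinv_neq_0_compat. lra. }
    rewrite E'. reflexivity.
  - intros p q p' q' E.
    set (N := Z.to_nat (Z.max 0 (Z.max q q'))).
    assert (Hq : (q <= Z.of_nat N)%Z) by lia.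
    assert (Hq' : (q' <= Z.of_nat N)%Z) by lia.
    rewrite (dyadC p q N Hq), (dyadC p' q' N Hq') in E.
    rewrite (barC f g H Hf H0 p q N Hq), (barC f g H Hf H0 p' q' N Hq').
    specialize (Hpos N).
    apply (g_iter_mono f g H).
    apply (Rmult_lt_reg_r (/ 2 ^ N)). apply Rinv_0_lt_compat. lra. exact E.
  - intros p q n E.
    set (N := Z.to_nat (Z.max 0 q)).
    assert (Hq : (q <= Z.of_nat N)%Z) by lia.
    rewrite (dyadC p q N Hq) in E.
    rewrite (barC f g H Hf H0 p q N Hq).
    specialize (Hpos N).
    assert (E' : IZR (p * 2 ^ (Z.of_nat N - q)) = IZR (n * 2 ^ Z.of_nat N)).
    { rewrite (mult_IZR n), IZR2pow, <- E. field. lra. }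
    rewrite E'. exact (g_iter_div f g H Hf H0 0 N _).
  - intros p q p' q' E.
    set (N := Z.to_nat (Z.max 0 (Z.max q q'))).
    assert (Hq : (q <= Z.of_nat N)%Z) by lia.
    assert (Hq' : (q' <= Z.of_nat N)%Z) by lia.
    rewrite (dyadC p q N Hq), (dyadC p' q' N Hq') in E.
    rewrite (barC f g H Hf H0 p q N Hq), (barC f g H Hf H0 p' q' N Hq').
    specialize (Hpos N).
    assert (E' : IZR (p' * 2 ^ (Z.of_nat N - q')) =
                 IZR (p * 2 ^ (Z.of_nat N - q)) + 2 ^ N * IZR 1).
    { replace (IZR (p' * 2 ^ (Z.of_nat N - q'))) with
        (IZR (p' * 2 ^ (Z.of_nat N - q')) / 2 ^ N * 2 ^ N) by (field; lra).
      rewrite E. field. lra. }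
    rewrite E'. rewrite (g_iter_shift f g H Hf). reflexivity.
Qed.
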